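(* Let $H$ be a monoid and let $A\subseteq H\setminus\{1_H\}$ be a non-empty finite set such that $a\nmid_H b$ for all $a,b\in A$ with $a\neq b$. Then the set $\{1_H\}\cup A$ is irreducible in $\mathcal{P}_{\mathrm{fin},1}(H)$.
   Context: For a monoid $H$, $x\mid_H y$ means $y\in HxH=\{uxv:u,v\in H\}$. $\mathcal{P}_{\mathrm{fin},1}(H)$ denotes the set of all non-empty finite subsets of $H$ containing $1_H$, a monoid under $XY=\{xy:x\in X,y\in Y\}$. In a monoid $M$: $x\mid_M y$ iff $y\in MxM$; $x,y$ are associated if each divides the other; $x$ properly divides $y$ if $x\mid_M y$ and $y\nmid_M x$. A unit-divisor is an element dividing $1_M$; other elements are non-unit-divisors. An irreducible of $M$ is a non-unit-divisor $a$ such that $a\neq xy$ for all non-unit-divisors $x,y$ properly dividing $a$. *)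

(* Defs.v *)
From HB Require Import structures.
From mathcomp Require Import all_boot.
From mathcomp Require Import finmap.
Set Implicit Arguments. Unset Strict Implicit. Unset Printing Implicit Defensive.
Local Open Scope fset_scope.

Section Defs.
Variable H : monoidType.

Local Notation "x * y" := (@mul H x y).
Local Notation "1" := (@one H).

Definition mdvd (x y : H) : Prop := exists u v : H, y = u * x * v.

Definition Pfin1 (X : {fset H}) : bool := 1 \in X.

Definition fset_mul (X Y : {fset H}) : {fset H} :=
  [fset x * y | x in X, y in Y].

Definition Pone : {fset H} := [fset 1].

Definition Pdvd (X Y : {fset H}) : Prop :=
  exists U V : {fset H}, Pfin1 U /\ Pfin1 V /\ Y = fset_mul (fset_mul U X) V.

Definition Pproper_dvd (X Y : {fset H}) : Prop := Pdvd X Y /\ ~ Pdvd Y X.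

Definition Punit_divisor (X : {fset H}) : Prop := Pdvd X Pone.

Definition Pirreducible (A : {fset H}) : Prop :=
  Pfin1 A /\ ~ Punit_divisor A /\
  forall X Y : {fset H}, Pfin1 X -> Pfin1 Y ->
    ~ Punit_divisor X -> ~ Punit_divisor Y ->
    Pproper_dvd X A -> Pproper_dvd Y A -> A <> fset_mul X Y.

End Defs.

(* Main.v *)
Require Import Defs.
From HB Require Import structures.
From mathcomp Require Import all_boot.
From mathcomp Require Import finmap.
Local Open Scope fset_scope.

Section Aux.
Variable H : monoidType.
Local Notation "x * y" := (@mul H x y).
Local Notation "1" := (@one H).

Lemma memM (X Y : {fset H}) x y : x \in X -> y \in Y -> x * y \in fset_mul X Y.
Proof. by move=> hx hy; rewrite /fset_mul; apply/imfset2P; exists x => //; exists y. Qed.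

Lemma memMP (X Y : {fset H}) z : z \in fset_mul X Y ->
  exists x y, [/\ x \in X, y \in Y & z = x * y].
Proof. by move/imfset2P=> [x hx [y hy ->]]; exists x, y. Qed.

Lemma mul1F (X : {fset H}) : fset_mul (Pone H) X = X.
Proof.
apply/fsetP=> z; apply/idP/idP.
  by move/memMP=> [x [y [hx hy ->]]]; move: hx; rewrite /Pone inE => /eqP ->; rewrite mul1g.
by move=> hz; rewrite -[z]mul1g; apply: memM => //; rewrite /Pone inE.
Qed.

Lemma mulF1 (X : {fset H}) : fset_mul X (Pone H) = X.
Proof.
apply/fsetP=> z; apply/idP/idP.
  by move/memMP=> [x [y [hx hy ->]]]; move: hy; rewrite /Pone inE => /eqP ->; rewrite mulg1.
by move=> hz; rewrite -[z]mulg1; apply: memM => //; rewrite /Pone inE.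
Qed.
End Aux.

Theorem proposition2p4 (H : monoidType) (A : {fset H}) :
  A != fset0 ->
  (@one H) \notin A ->
  (forall a b : H, a \in A -> b \in A -> a != b -> ~ mdvd a b) ->
  Pirreducible ((@one H) |` A).
Proof.
move=> An0 n1A hA.
have [a0 a0A] : exists a, a \in A.
  by case/fset0Pn: An0 => a ha; exists a.
have B1 : (@one H) \in (@one H) |` A by rewrite !inE eqxx.
have inA : forall z, z \in (@one H) |` A -> z != @one H -> z \in A.
  by move=> z; rewrite !inE => /orP [/eqP -> /eqP|//].
have ne1 : forall z, z \in A -> z != @one H.
  by move=> z hz; apply/eqP=> e; move: n1A; rewrite -e hz.
split; first exact: B1.
split.
  move=> [U [V [hU [hV e]]]].
  have : mul (mul (@one H) a0) (@one H) \in Pone H.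
    by rewrite e; apply: memM => //; apply: memM => //; rewrite !inE a0A orbT.
  by rewrite mul1g mulg1 /Pone inE => /eqP ea; move: (ne1 _ a0A); rewrite ea eqxx.
move=> X Y hX hY _ _ [_ nX] [_ nY] eB.
set B := (@one H) |` A in eB nX nY *.
have XB : X != B.
  apply/eqP=> ex; apply: nX; exists (Pone H), (Pone H); split; first by rewrite /Pfin1 /Pone inE.
  split; first by rewrite /Pfin1 /Pone inE.
  by rewrite mul1F mulF1 ex.
have YB : Y != B.
  apply/eqP=> ex; apply: nY; exists (Pone H), (Pone H); split; first by rewrite /Pfin1 /Pone inE.
  split; first by rewrite /Pfin1 /Pone inE.
  by rewrite mul1F mulF1 ex.
have XsB : forall x, x \in X -> x \in B.
  by move=> x hx; rewrite eB -[x]mulg1; apply: memM.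
have YsB : forall y, y \in Y -> y \in B.
  by move=> y hy; rewrite eB -[y]mul1g; apply: memM.
have [c cB cX] : exists2 c, c \in B & c \notin X.
  apply/fsubsetPn; apply: contra XB => sub; rewrite eqEfsubset sub andbT.
  by apply/fsubsetP=> x; apply: XsB.
have [d dB dY] : exists2 d, d \in B & d \notin Y.
  apply/fsubsetPn; apply: contra YB => sub; rewrite eqEfsubset sub andbT.
  by apply/fsubsetP=> x; apply: YsB.
have cA : c \in A by apply: inA => //; apply/eqP=> e; move: cX; rewrite e (hX : _ \in X).
have dA : d \in A by apply: inA => //; apply/eqP=> e; move: dY; rewrite e (hY : _ \in Y).
have cY : c \in Y.
  move: cB; rewrite eB => /memMP [x [y [hx hy ec]]].
  have [x1|xn1] := eqVneq x (@one H); first by rewrite ec x1 mul1g.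
  have xA := inA _ (XsB _ hx) xn1.
  have [xc|xnc] := eqVneq x c; first by move: cX; rewrite -xc hx.
  by exfalso; apply: (hA x c xA cA xnc); exists (@one H), y; rewrite mul1g.
have dX : d \in X.
  move: dB; rewrite eB => /memMP [x [y [hx hy ed]]].
  have [y1|yn1] := eqVneq y (@one H); first by rewrite ed y1 mulg1.
  have yA := inA _ (YsB _ hy) yn1.
  have [yd|ynd] := eqVneq y d; first by move: dY; rewrite -yd hy.
  by exfalso; apply: (hA y d yA dA ynd); exists x, (@one H); rewrite mulg1.
have dnc : d != c by apply/eqP=> e; move: cX; rewrite -e dX.
have dcB : mul d c \in B by rewrite eB; apply: memM.
have [dc1|dcn1] := eqVneq (mul d c) (@one H).
  by apply: (hA d c dA cA dnc); exists c, c; rewrite -mulgA dc1 mulg1.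
have dcA := inA _ dcB dcn1.
have [e1|ne1'] := eqVneq d (mul d c).
  have [e2|ne2] := eqVneq c (mul d c).
    by move/eqP: dnc; apply; exact: etrans e1 (esym e2).
  by apply: (hA c _ cA dcA ne2); exists d, (@one H); rewrite mulg1.
by apply: (hA d _ dA dcA ne1'); exists (@one H), c; rewrite mul1g.
Qed.
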